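(* Assume (A1) and (A2) below. Then for any $s\in\mathcal S$ and policy $\pi$, $$\mathbb{E}_{p_s\sim\Phi_{s,t}}\Big[\Big(\mathbb{E}_{p\sim\Phi_t}\Big[\sum_{a,s'}p(a,s'\mid s)V^{\pi,p}(s')\;\Big|\;\mathbf P_s\Big]\Big)^2\Big]=\sum_{a,s'}\bar p_t(a,s'\mid s)\big(\bar V^\pi_t(s')\big)^2-\mathbb{E}_{p\sim\Phi_t}\Big[\mathbb{V}_{a,s'\sim\pi,p}\big[\bar V^\pi_t(s')\big]\Big].$$
   Context: Let $\mathcal S$ be a finite state space, $\mathcal A$ a finite action space, $r:\mathcal S\times\mathcal A\to\mathbb R$ a known bounded (deterministic) reward function and $\gamma\in[0,1)$ a discount factor. A transition function $p$ assigns to each $(s,a)$ a probability distribution $p(\cdot\mid s,a)$ on $\mathcal S$. A policy $\pi$ gives distributions $\pi(\cdot\mid s)$ on $\mathcal A$; write $p(a,s'\mid s)=\pi(a\mid s)p(s'\mid s,a)$. For a transition function $p$, the value function is $V^{\pi,p}(s)=\mathbb E\big[\sum_{h\ge 0}\gamma^h r(s_h,a_h)\mid s_0=s\big]$ with $a_h\sim\pi(\cdot\mid s_h)$, $s_{h+1}\sim p(\cdot\mid s_h,a_h)$. The transition function $p$ is a random variable with distribution $\Phi_t$; $\bar p_t(s'\mid s,a)=\mathbb E_{p\sim\Phi_t}[p(s'\mid s,a)]$, $\bar p_t(a,s'\mid s)=\pi(a\mid s)\bar p_t(s'\mid s,a)$, $\bar V^\pi_t(s)=\mathbb E_{p\sim\Phi_t}[V^{\pi,p}(s)]$.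 For a transition function $q$ and a function $f$ on $\mathcal S$, $\mathbb V_{a,s'\sim\pi,q}[f(s')]$ denotes the variance of $f(s')$ when $a\sim\pi(\cdot\mid s)$ and $s'\sim q(\cdot\mid s,a)$. For fixed $s$, $p_s$ denotes the map $a\mapsto p(\cdot\mid s,a)$, $\mathbf P_s=\{p_s(s'\mid a)\}_{s'\in\mathcal S,a\in\mathcal A}$, and $\Phi_{s,t}$ is the marginal of $\Phi_t$ on the transitions starting from $s$. Assumptions: (A1) (independent transitions) $p(s'\mid x,a)$ and $p(s'\mid y,a)$ are independent random variables if $x\neq y$; (A2) (acyclic MDP) the MDP is a directed acyclic graph, i.e., states are not visited more than once in any given episode. *)

(* Defs.v *)
From HB Require Import structures.
From mathcomp Require Import all_boot all_order all_algebra.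
From mathcomp Require Import all_classical all_reals all_analysis.
Set Implicit Arguments. Unset Strict Implicit. Unset Printing Implicit Defensive.
Import Order.TTheory GRing.Theory Num.Theory.
Import numFieldNormedType.Exports.
Local Open Scope classical_set_scope.
Local Open Scope ring_scope.

Section Defs.
Variables (R : realType) (S A : finType).

(* a transition function: q x a y = q(y | x, a) *)
Definition is_trans (q : S -> A -> S -> R) : Prop :=
  (forall x a y, 0 <= q x a y) /\ (forall x a, \sum_(y : S) q x a y = 1).

Definition is_policy (pi : S -> A -> R) : Prop :=
  (forall x a, 0 <= pi x a) /\ (forall x, \sum_(a : A) pi x a = 1).

(* step_reward pi r q h x = E[ r(s_h, a_h) | s_0 = x ] under pi and q *)
Fixpoint step_reward (pi : S -> A -> R) (r : S -> A -> R)
    (q : S -> A -> S -> R) (h : nat) (x : S) : R :=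
  match h with
  | 0 => \sum_(a : A) pi x a * r x a
  | h'.+1 => \sum_(a : A) pi x a * \sum_(y : S) q x a y * step_reward pi r q h' y
  end.

Definition value (gamma : R) (pi : S -> A -> R) (r : S -> A -> R)
    (q : S -> A -> S -> R) (x : S) : R :=
  limn (fun n => \sum_(h < n) gamma ^+ h * step_reward pi r q h x).

Definition var_next (pi : S -> A -> R) (q : S -> A -> S -> R) (s : S)
    (f : S -> R) : R :=
  \sum_(a : A) \sum_(y : S) pi s a * q s a y * (f y) ^+ 2
  - (\sum_(a : A) \sum_(y : S) pi s a * q s a y * f y) ^+ 2.

Context {d : measure_display} {Omega : measurableType d}.

Definition sigma_state (p : Omega -> S -> A -> S -> R) (x : S) : set (set Omega) :=
  <<s [set E | exists (a : A) (y : S) (V : set R),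
         measurable V /\ E = (fun w => p w x a y) @^-1` V] >>.

Definition independent_transitions (P : probability Omega R)
    (p : Omega -> S -> A -> S -> R) : Prop :=
  forall E : S -> set Omega, (forall x, sigma_state p x (E x)) ->
    fine (P (\bigcap_(x : S) E x)) = \prod_(x : S) fine (P (E x)).

(* There is a fixed rank on states and a fixed set T of
   absorbing terminal states; from a non-terminal state every possible
   transition strictly increases the rank, so no state is visited twice
   (except absorption in a terminal state, which ends the episode). *)
Definition acyclic_model (p : Omega -> S -> A -> S -> R) : Prop :=
  exists (rank : S -> nat) (T : {set S}),
    forall w x a y, 0 < p w x a y ->
      if x \in T then y = x else (rank x < rank y)%N.

Definition is_cond_exp (P : probability Omega R) (F : set (set Omega))
    (f g : Omega -> R) : Prop :=
  (forall V : set R, measurable V -> F (g @^-1` V)) /\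
  P.-integrable setT (EFin \o g) /\
  (forall E, F E -> (\int[P]_(w in E) (g w)%:E = \int[P]_(w in E) (f w)%:E)%E).

End Defs.

(* Main.v *)
From HB Require Import structures.
From mathcomp Require Import all_boot all_order all_algebra.
From mathcomp Require Import all_classical all_reals all_analysis.
Require Import Defs.
From mathcomp Require Import measurable_realfun.
From mathcomp Require Import ring lra.
Set Implicit Arguments. Unset Strict Implicit. Unset Printing Implicit Defensive.
Import Order.TTheory GRing.Theory Num.Theory.
Import numFieldNormedType.Exports.
Import archimedean.Num.Theory archimedean.Num.Def.
Local Open Scope classical_set_scope.
Local Open Scope ring_scope.

Section PA.
Context d (T : measurableType d) (R : realType) (P : probability T R).

Definition bm (f : T -> R) := measurable_fun setT f /\ exists M, forall w, `|f w| <= M.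

Lemma bm_cst c : bm (fun _ => c).
Proof. by split; [exact: measurable_cst | exists `|c|]. Qed.

Lemma bmD f g : bm f -> bm g -> bm (fun w => f w + g w).
Proof.
move=> [mf [M hM]] [mg [N hN]]; split; first exact: measurable_funD.
exists (M + N) => w; by rewrite (le_trans (ler_normD _ _))// lerD.
Qed.

Lemma bmM f g : bm f -> bm g -> bm (fun w => f w * g w).
Proof.
move=> [mf [M hM]] [mg [N hN]]; split; first exact: measurable_funM.
exists (M * N) => w; rewrite normrM ler_pM//.
Qed.

Lemma bmN f : bm f -> bm (fun w => - f w).
Proof.
move=> [mf [M hM]]; split; first exact: measurableT_comp.
by exists M => w; rewrite normrN.
Qed.

Lemma bmB f g : bm f -> bm g -> bm (fun w => f w - g w).
Proof. by move=> hf hg; apply: bmD => //; exact: bmN. Qed.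

Lemma bm_sum (I : Type) (s : seq I) (F : I -> T -> R) :
  (forall i, bm (F i)) -> bm (fun w => \sum_(i <- s) F i w).
Proof.
move=> hF; elim: s => [|i s IH].
  by under [X in bm X]funext do rewrite big_nil; exact: bm_cst.
by under [X in bm X]funext do rewrite big_cons; exact: bmD.
Qed.

Lemma bm_indic A : measurable A -> bm (\1_A : T -> R).
Proof.
move=> mA; split; first exact: measurable_indic.
by exists 1 => w; rewrite indicE; case: (_ \in _); rewrite ?normr1 ?normr0.
Qed.

Lemma bm_int D f : measurable D -> bm f -> P.-integrable D (EFin \o f).
Proof.
move=> mD [mf [M hM]]; apply: measurable_bounded_integrable => //.
- by rewrite (le_lt_trans (probability_le1 _ mD))// ltry.
- exact: measurable_funS mf.
- exists M; split; first by rewrite num_real.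
  move=> y yM x _; exact: le_trans (hM x) (ltW yM).
Qed.

Lemma Rint_sum D (I : Type) (s : seq I) (F : I -> T -> R) : measurable D ->
  (forall i, bm (F i)) ->
  Rintegral P D (fun w => \sum_(i <- s) F i w) = \sum_(i <- s) Rintegral P D (F i).
Proof.
move=> mD hF; elim: s => [|i s IH].
  under eq_Rintegral do rewrite big_nil.
  by rewrite big_nil Rintegral_cst// mul0r.
under eq_Rintegral do rewrite big_cons.
rewrite big_cons RintegralD//; first by rewrite IH.
- exact: bm_int.
- by apply: bm_int => //; exact: bm_sum.
Qed.

Lemma Rint_bound f B : bm f -> (forall w, `|f w| <= B) ->
  `|Rintegral P setT f| <= B.
Proof.
move=> hf hB; rewrite (le_trans (le_normr_Rintegral _ _))//.
- exact: bm_int.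
rewrite (@le_trans _ _ (Rintegral P setT (fun _ => B)))//.
  apply: le_Rintegral => //.
  + by apply: bm_int => //; case: hf => mf [M hM]; split;
      [exact: measurableT_comp | exists M => w; rewrite normr_id].
  + exact/bm_int/bm_cst.
rewrite Rintegral_cst//.
suff -> : fine (P setT) = 1 by rewrite mulr1.
by rewrite probability_setT.
Qed.

Lemma Rint_indic A : measurable A -> Rintegral P setT (\1_A) = fine (P A).
Proof. by move=> mA; rewrite /Rintegral integral_indic// setIT. Qed.

Lemma RintZl D f c : measurable D -> bm f ->
  Rintegral P D (fun w => c * f w) = c * Rintegral P D f.
Proof. by move=> mD hf; rewrite RintegralZl//; exact: bm_int. Qed.

Lemma RintZr D f c : measurable D -> bm f ->
  Rintegral P D (fun w => f w * c) = Rintegral P D f * c.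
Proof. by move=> mD hf; rewrite RintegralZr//; exact: bm_int. Qed.

End PA.

Lemma mpre d1 (T1 : measurableType d1) d2 (T2 : measurableType d2) (f : T1 -> T2) Y :
  measurable_fun setT f -> measurable Y -> measurable (f @^-1` Y).
Proof. by move=> mf mY; rewrite -[f @^-1` _]setTI; exact: mf. Qed.

Lemma small_eq0 (R : realType) (x C : R) : 0 <= C ->
  (forall e, 0 < e -> `|x| <= e * C) -> x = 0.
Proof.
move=> C0 H; apply/eqP; apply/negPn/negP => x0.
have ax : 0 < `|x| by rewrite normr_gt0.
have := H (`|x| / (2 * (C + 1))).
have hC : 0 < 2 * (C + 1) by rewrite mulr_gt0// ltr_pwDr.
rewrite divr_gt0// => /(_ isT).
rewrite mulrAC ler_pdivlMr// => h.
have : `|x| * (2 * (C + 1)) <= `|x| * C by [].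
rewrite -subr_ge0 -mulrBr pmulr_rge0//; lra.
Qed.

Section Dyadic.
Context d (T : measurableType d) (R : realType) (P : probability T R).

Lemma dyadic (f k : T -> R) (c : R) : bm f -> bm k ->
  (forall a b : R, Rintegral P setT (fun w => \1_(f @^-1` `[a, b[) w * k w)
     = fine (P (f @^-1` `[a, b[)) * c) ->
  Rintegral P setT (fun w => f w * k w) = Rintegral P setT f * c.
Proof.
move=> hf hk H.
have [mf [M0 hM0]] := hf; have [mk [K0 hK0]] := hk.
set M := `|M0|; set K := `|K0|.
have hM w : `|f w| <= M by rewrite (le_trans (hM0 w))// ler_norm.
have hK w : `|k w| <= K by rewrite (le_trans (hK0 w))// ler_norm.
have M0' : 0 <= M by exact: normr_ge0.
apply/eqP; rewrite -subr_eq0; apply/eqP.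
apply: (@small_eq0 _ _ (K + `|c|)); first exact: addr_ge0 (normr_ge0 _) (normr_ge0 _).
move=> δ δ0.
pose N := (truncn (2 * M / δ)).+1.
pose A (j : nat) := f @^-1` `[- M + j%:R * δ, - M + j.+1%:R * δ[.
have mA j : measurable (A j) by apply: mpre => //; exact: measurable_itv.
pose φ w := \sum_(j < N) (- M + j%:R * δ) * \1_(A j) w.
have hφ w : `|f w - φ w| <= δ.
  pose t := (f w + M) / δ.
  have t0 : 0 <= t.
    apply: divr_ge0; last exact: ltW. have := hM w; rewrite ler_norml => /andP[]; lra.
  have jN : (truncn t < N)%N.
    rewrite ltnS le_truncn// ler_pM2r ?invr_gt0// mulr2n mulrDl mul1r lerD2r.
    exact: le_trans (ler_norm _) (hM w).
  have iA (j : 'I_N) : \1_(A j) w = (j == Ordinal jN)%:R :> R.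
    rewrite indicE; suff -> : (w \in A j) = (j == Ordinal jN) by [].
    apply/idP/idP.
    - move/set_mem; rewrite /A /= in_itv /= => /andP[h1 h2].
      apply/eqP/val_inj => /=; apply/esym/eqP; rewrite truncn_eq//.
      rewrite /t ler_pdivlMr// ltr_pdivrMr//.
      by apply/andP; split; lra.
    - move/eqP => ->; apply/mem_set; rewrite /A /= in_itv /=.
      have /andP[h1 h2] := truncn_itv t0.
      rewrite /t ler_pdivlMr// ltr_pdivrMr// in h1 h2.
      by apply/andP; split; lra.
  have -> : φ w = - M + (truncn t)%:R * δ.
    rewrite /φ (bigD1 (Ordinal jN)) // big1 => [|j /negPf hj]; last by rewrite iA hj mulr0.
    by rewrite (iA (Ordinal jN)) eqxx mulr1 /= addr0.
  have /andP[h1 h2] := truncn_itv t0.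
  rewrite /t ler_pdivlMr// ltr_pdivrMr// in h1 h2.
  rewrite mulrSr mulrDl mul1r in h2.
  rewrite ger0_norm; lra.
have bφ : bm φ.
  by apply: bm_sum => j; apply: bmM; [exact: bm_cst | exact: bm_indic].
have I1 : Rintegral P setT (fun w => φ w * k w)
          = \sum_(j < N) (- M + j%:R * δ) * (fine (P (A j)) * c).
  under eq_Rintegral do rewrite /φ mulr_suml.
  rewrite Rint_sum//; last first.
    by move=> j; apply: bmM => //; apply: bmM; [exact: bm_cst | exact: bm_indic].
  apply: eq_bigr => j _; under eq_Rintegral do rewrite -mulrA.
  rewrite RintZl//; last by apply: bmM => //; exact: bm_indic.
  by rewrite H.
have I2 : Rintegral P setT φ = \sum_(j < N) (- M + j%:R * δ) * fine (P (A j)).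
  rewrite /φ Rint_sum//; last first.
    by move=> j; apply: bmM; [exact: bm_cst | exact: bm_indic].
  apply: eq_bigr => j _; rewrite RintZl//; last exact: bm_indic.
  by rewrite Rint_indic.
have E1 : `|Rintegral P setT (fun w => f w * k w) - Rintegral P setT (fun w => φ w * k w)| <= δ * K.
  rewrite -RintegralB//; try by apply: bm_int => //; apply: bmM.
  apply: Rint_bound; first by apply: bmB; apply: bmM.
  by move=> w; rewrite -mulrBl normrM ler_pM.
have E2 : `|Rintegral P setT f - Rintegral P setT φ| <= δ.
  rewrite -RintegralB//; try exact: bm_int.
  by apply: Rint_bound => //; exact: bmB.
have -> : Rintegral P setT (fun w => f w * k w) - Rintegral P setT f * c =
   (Rintegral P setT (fun w => f w * k w) - Rintegral P setT (fun w => φ w * k w))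
   - (Rintegral P setT f - Rintegral P setT φ) * c.
  rewrite I1 I2.
  have -> : \sum_(j < N) (- M + j%:R * δ) * (fine (P (A j)) * c) =
     (\sum_(j < N) (- M + j%:R * δ) * fine (P (A j))) * c.
    by rewrite mulr_suml; apply: eq_bigr => j _; rewrite mulrA.
  ring.
rewrite mulrDr (le_trans (ler_normB _ _))// lerD// normrM.
by rewrite ler_wpM2r // E2.
Qed.
End Dyadic.

Section IndepFun.
Context d (T : measurableType d) (R : realType) (P : probability T R).

Lemma indep_fun (F G : set (set T)) (U V : T -> R) :
  (forall A B, F A -> G B -> measurable A -> measurable B ->
     fine (P (A `&` B)) = fine (P A) * fine (P B)) ->
  bm U -> bm V ->
  (forall a b, F (U @^-1` `[a, b[)) -> (forall a b, G (V @^-1` `[a, b[)) ->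
  Rintegral P setT (fun w => U w * V w) =
  Rintegral P setT U * Rintegral P setT V.
Proof.
move=> hFG hU hV FU GV.
have mU := hU.1; have mV := hV.1.
have step1 B : G B -> measurable B ->
    Rintegral P setT (fun w => U w * \1_B w) = Rintegral P setT U * fine (P B).
  move=> GB mB; apply: dyadic => //; first exact: bm_indic.
  move=> a b.
  have mA : measurable (U @^-1` `[a, b[) by apply: mpre => //; exact: measurable_itv.
  rewrite (@eq_Rintegral _ _ _ P setT (\1_(U @^-1` `[a, b[ `&` B))); last first.
    by move=> w _; rewrite indicI.
  rewrite Rint_indic; last exact: measurableI.
  exact: hFG.
rewrite [RHS]mulrC -[LHS]/(Rintegral P setT (fun w => U w * V w)).
under eq_Rintegral do rewrite mulrC.
apply: dyadic => // a b.
have mB : measurable (V @^-1` `[a, b[) by apply: mpre => //; exact: measurable_itv.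
under eq_Rintegral do rewrite mulrC.
by rewrite step1// mulrC.
Qed.

End IndepFun.

Section Events.
Variables (R : realType) (S A : finType) (d : measure_display) (Omega : measurableType d).
Variables (P : probability Omega R) (p : Omega -> S -> A -> S -> R).
Hypothesis hmeas : forall x a y, measurable_fun setT (fun w => p w x a y).
Hypothesis hind : independent_transitions P p.
Variable s : S.

Definition gen (x : S) : set (set Omega) :=
  [set E | exists (a : A) (y : S) (V : set R),
         measurable V /\ E = (fun w => p w x a y) @^-1` V].

Definition FT (x : S) := g_sigma_algebraType (gen x).

Lemma FsE x : sigma_state p x = (@measurable _ (FT x)).
Proof. by []. Qed.

Lemma Fs_meas x B : sigma_state p x B -> measurable B.
Proof.
apply: smallest_sub; first exact: sigma_algebra_measurable.
move=> _ [a [y [V [mV ->]]]]; exact: mpre.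
Qed.

Lemma Fs_T x : sigma_state p x setT.
Proof. exact: (@measurableT _ (FT x)). Qed.

Lemma Fs_I x B C : sigma_state p x B -> sigma_state p x C -> sigma_state p x (B `&` C).
Proof. exact: (@measurableI _ (FT x)). Qed.

Lemma Fs_gen x a y V : measurable V -> sigma_state p x ((fun w => p w x a y) @^-1` V).
Proof. by move=> mV; apply: sub_sigma_algebra; exists a, y, V. Qed.

Definition Pi : set (set Omega) :=
  [set B | exists E : S -> set Omega, E s = setT /\ (forall z, sigma_state p z (E z))
     /\ B = \bigcap_(z : S) E z].

Definition GT := g_sigma_algebraType Pi.

Lemma Pi_meas B : Pi B -> measurable B.
Proof.
move=> [E [_ [hE ->]]]; apply: fin_bigcap_measurable.
  exact: finite_finset.
by move=> z _; exact: Fs_meas.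
Qed.

Lemma Pi_I : setI_closed Pi.
Proof.
move=> _ _ [E [Es [hE ->]]] [E' [Es' [hE' ->]]].
exists (fun z => E z `&` E' z); split; first by rewrite Es Es' setTI.
split; first by move=> z; exact: Fs_I.
apply/seteqP; split => w /=.
  by move=> [h1 h2] z _; split; [exact: h1 | exact: h2].
by move=> h; split => z _; have [] := h z I.
Qed.

Lemma Gs_meas (B : set Omega) : (@measurable _ GT) B -> (@measurable _ Omega) B.
Proof.
move=> GB. have := @smallest_sub _ (sigma_algebra setT) Pi measurable (@sigma_algebra_measurable _ Omega). 
move=> /(_ Pi_meas) H. exact (H B GB).
Qed.

Lemma fin_P (B : set Omega) : measurable B -> P B = (fine (P B))%:E.
Proof. by move=> mB; rewrite fineK// fin_num_measure. Qed.

Lemma indep_Pi B C : sigma_state p s B -> Pi C ->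
  fine (P (B `&` C)) = fine (P B) * fine (P C).
Proof.
move=> FB [E [Es [hE ->]]].
pose E' z := if z == s then B else E z.
have hE' : forall z, sigma_state p z (E' z).
  by move=> z; rewrite /E'; case: eqP => [->|_]; [exact: FB | exact: hE].
have h1 := hind hE'.
have h2 := hind hE.
have -> : B `&` \bigcap_(z : S) E z = \bigcap_(z : S) E' z.
  apply/seteqP; split => w /=.
    move=> [Bw h] z _; rewrite /E'; case: eqP => _ //; exact: h.
  move=> h; split; first by have := h s I; rewrite /E' eqxx.
  move=> z _; have := h z I; rewrite /E'; case: eqP => [->|//].
  by rewrite Es.
rewrite h1 h2 (bigD1 s)//= [in RHS](bigD1 s)//= Es probability_setT /= mul1r.
rewrite /E' eqxx; congr (_ * _); apply: eq_bigr => z /negPf zs.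
by rewrite zs.
Qed.

End Events.

Section Events2.
Variables (R : realType) (S A : finType) (d : measure_display) (Omega : measurableType d).
Variables (P : probability Omega R) (p : Omega -> S -> A -> S -> R).
Hypothesis hmeas : forall x a y, measurable_fun setT (fun w => p w x a y).
Hypothesis hind : independent_transitions P p.
Variable s : S.

Lemma indep_G (B C : set Omega) : sigma_state p s B -> (@measurable _ (GT p s)) C ->
  fine (P (B `&` C)) = fine (P B) * fine (P C).
Proof.
move=> FB GC.
have mB := Fs_meas hmeas FB.
pose H := [set C : set Omega | measurable C /\ P (B `&` C) = (P B * P C)%E].
suff: <<s setT, Pi p s>> `<=` H.
  move=> /(_ C GC) [mC ->]; rewrite fineM// fin_num_measure//.
apply: lambda_system_subset.
- exact: Pi_I.
- apply/dynkin_lambda_system; split.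
  + by split => //; rewrite setIT probability_setT mule1.
  + move=> C1 [mC1 h]; split; first exact: measurableC.
    rewrite -setDE measureD//; last by rewrite (le_lt_trans (probability_le1 _ mB))// ltry.
    have -> : (P B - P (B `&` C1) = P B - P B * P C1)%E by rewrite -h.
    rewrite probability_setC// (fin_P P mB) (fin_P P mC1).
    by rewrite -EFinM -!EFinB -EFinM; congr EFin; ring.
  + move=> F tF hF; split.
      by apply: bigcup_measurable => k _; exact: (hF k).1.
    rewrite setI_bigcupr measure_bigcup//; last first.
      - exact: trivIset_setIl.
      - by move=> i _; apply: measurableI => //; exact: (hF i).1.
    apply: (@eq_trans _ _ (\sum_(i <oo | i \in setT) (P B * P (F i)))%E).
      by apply: eq_eseriesr => i _; exact: (hF i).2.
    rewrite measure_bigcup//; last by move=> i _; exact: (hF i).1.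
    by rewrite (fin_P P mB) nneseriesZl.
- move=> C1 PC; split; first exact: Pi_meas PC.
  rewrite (fin_P P (measurableI _ _ mB (Pi_meas hmeas PC))) (fin_P P mB) (fin_P P (Pi_meas hmeas PC)).
  by rewrite (indep_Pi hind FB PC) EFinM.
- by [].
Qed.

End Events2.

Section Geo.
Variable R : realType.

Lemma geo_sum (g : R) n : (1 - g) * \sum_(h < n) g ^+ h = 1 - g ^+ n.
Proof.
elim: n => [|n IH]; first by rewrite big_ord0 mulr0 expr0 subrr.
by rewrite big_ord_recr /= mulrDr IH exprS; ring.
Qed.

Lemma geo_bound (u : nat -> R) (B g : R) : 0 <= g < 1 ->
  (forall n, `|u n| <= B * g ^+ n) ->
  cvgn (fun n => \sum_(h < n) u h) /\
  (forall n, `|\sum_(h < n) u h| <= B / (1 - g)).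
Proof.
move=> /andP[g0 g1] hu.
have B0 : 0 <= B by have := hu 0%N; rewrite expr0 mulr1; apply: le_trans.
have g1' : 0 < 1 - g by rewrite subr_gt0.
have bnd n : \sum_(h < n) `|u h| <= B / (1 - g).
  rewrite (@le_trans _ _ (\sum_(h < n) B * g ^+ h))//; first by apply: ler_sum => h _.
  rewrite -mulr_sumr ler_pdivlMr// -mulrA [X in _ * X]mulrC geo_sum.
  by rewrite ler_piMr// lerBlDr lerDl exprn_ge0.
split; last first.
  by move=> n; rewrite (le_trans (ler_norm_sum _ _ _))// bnd.
have -> : (fun n => \sum_(h < n) u h) = series u by rewrite seriesEord.
apply: normed_cvg; apply: nondecreasing_is_cvgn.
- move=> m n mn.
  change (\sum_(0 <= k < m) `|u k| <= \sum_(0 <= k < n) `|u k|).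
  by rewrite !big_mkord -(subnKC mn) big_split_ord /= lerDl sumr_ge0.
- exists (B / (1 - g)) => _ [n _ <-].
  change (\sum_(0 <= k < n) `|u k| <= B / (1 - g)).
  by rewrite big_mkord; exact: bnd.
Qed.

End Geo.

Section MDPbound.
Variables (R : realType) (S A : finType) (r : S -> A -> R) (gamma : R) (pi : S -> A -> R).
Hypothesis hpi : is_policy pi.
Hypothesis hg : 0 <= gamma < 1.

Definition Mr := \sum_(x : S) \sum_(a : A) `|r x a|.

Lemma r_le x a : `|r x a| <= Mr.
Proof.
have h1 : `|r x a| <= \sum_(a0 : A) `|r x a0|.
  by rewrite (bigD1 a)//= lerDl sumr_ge0.
apply: (le_trans h1); rewrite /Mr (bigD1 x)//= lerDl.
by apply: sumr_ge0 => i _; apply: sumr_ge0.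
Qed.

Lemma pol_sum (F : A -> R) x : (forall a, `|F a| <= Mr) ->
  `|\sum_(a : A) pi x a * F a| <= Mr.
Proof.
move=> hF; rewrite (le_trans (ler_norm_sum _ _ _))//.
rewrite (@le_trans _ _ (\sum_(a : A) pi x a * Mr))//.
  apply: ler_sum => a _; rewrite normrM ger0_norm; last exact: hpi.1.
  by rewrite ler_wpM2l//; exact: hpi.1.
by rewrite -mulr_suml hpi.2 mul1r.
Qed.

Lemma trans_sum (q : S -> A -> S -> R) (F : S -> R) x a : is_trans q ->
  (forall y, `|F y| <= Mr) -> `|\sum_(y : S) q x a y * F y| <= Mr.
Proof.
move=> hq hF; rewrite (le_trans (ler_norm_sum _ _ _))//.
rewrite (@le_trans _ _ (\sum_(y : S) q x a y * Mr))//.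
  apply: ler_sum => y _; rewrite normrM ger0_norm; last exact: hq.1.
  by rewrite ler_wpM2l//; exact: hq.1.
by rewrite -mulr_suml hq.2 mul1r.
Qed.

Lemma step_bound q h x : is_trans q -> `|step_reward pi r q h x| <= Mr.
Proof.
move=> hq; elim: h x => [|h IH] x /=.
  by apply: pol_sum => a; exact: r_le.
by apply: pol_sum => a; apply: trans_sum.
Qed.

Lemma value_cvg q x : is_trans q ->
  cvgn (fun n => \sum_(h < n) gamma ^+ h * step_reward pi r q h x) /\
  `|value gamma pi r q x| <= Mr / (1 - gamma).
Proof.
move=> hq.
have g0 : 0 <= gamma by case/andP: hg.
have hu n : `|gamma ^+ n * step_reward pi r q n x| <= Mr * gamma ^+ n.
  rewrite normrM ger0_norm ?exprn_ge0// mulrC ler_wpM2r ?exprn_ge0//.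
  exact: step_bound.
have [c b] := @geo_bound _ (fun h => gamma ^+ h * step_reward pi r q h x) Mr gamma hg hu.
split => //; rewrite /value ler_norml; apply/andP; split.
  by apply: limr_ge => //; apply: nearW => n; have := b n; rewrite ler_norml => /andP[].
by apply: limr_le => //; apply: nearW => n; have := b n; rewrite ler_norml => /andP[].
Qed.

End MDPbound.

Lemma mf_sum d0 (T0 : measurableType d0) (R : realType) (I : finType) (F : I -> T0 -> R) :
  (forall i, measurable_fun setT (F i)) -> measurable_fun setT (fun w => \sum_(i : I) F i w).
Proof. by move=> hF; apply: measurable_sum. Qed.

Lemma mf_M d0 (T0 : measurableType d0) (R : realType) (f g : T0 -> R) :
  measurable_fun setT f -> measurable_fun setT g -> measurable_fun setT (fun w => f w * g w).
Proof. by move=> hf hg; apply: measurable_funM. Qed.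

Section Reach.
Variables (R : realType) (S A : finType) (d : measure_display) (Omega : measurableType d).
Variables (P : probability Omega R) (p : Omega -> S -> A -> S -> R).
Variables (r : S -> A -> R) (gamma : R) (pi : S -> A -> R) (s : S).
Variables (rank : S -> nat) (T0 : {set S}).
Hypothesis htr : forall w, is_trans (p w).
Hypothesis hmeas : forall x a y, measurable_fun setT (fun w => p w x a y).
Hypothesis hacyc : forall w x a y, 0 < p w x a y ->
      if x \in T0 then y = x else (rank x < rank y)%N.

Definition q' (w : Omega) (x : S) (a : A) (z : S) : R :=
  if x == s then (z == s)%:R else p w x a z.

Definition Good (y : S) : bool :=
  if s \in T0 then y == s else (y != s) && ((y \in T0) || (rank s < rank y)%N).

Lemma q'_trans w : is_trans (q' w).
Proof.
split.
  by move=> x a z; rewrite /q'; case: eqP => _; [exact: ler0n | exact: (htr w).1].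
move=> x a; rewrite /q'; case: eqP => _; last exact: (htr w).2.
rewrite (bigD1 s)//= eqxx big1 ?addr0// => z /negPf -> //.
Qed.

Lemma p_ge0 w x a y : 0 <= p w x a y. Proof. exact: (htr w).1. Qed.

Lemma p_pos_or0 w x a y : 0 < p w x a y \/ p w x a y = 0.
Proof.
have := p_ge0 w x a y; rewrite le_eqVlt => /orP[/eqP <-|]; by [right | left].
Qed.

Lemma pos_good w a y : 0 < p w s a y -> Good y.
Proof.
move=> /hacyc; rewrite /Good; case: (s \in T0) => [->//|h].
by rewrite h orbT andbT; apply/eqP => ys; move: h; rewrite ys ltnn.
Qed.

Lemma good_step w y a z : Good y -> 0 < p w y a z -> Good z.
Proof.
move=> gy pz; have := hacyc pz; move: gy; rewrite /Good.
case sT : (s \in T0).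
  by move=> /eqP ->; rewrite sT => ->.
move=> /andP[ys yTr] h.
case yT : (y \in T0) in yTr h *.
  by rewrite h ys yT.
rewrite /= in yTr.
have sz := ltn_trans yTr h.
rewrite sz orbT andbT; apply/eqP => zs; by move: sz; rewrite zs ltnn.
Qed.

Lemma row_eq w y a z : Good y -> p w y a z = q' w y a z.
Proof.
rewrite /Good /q'; case sT : (s \in T0).
  move=> /eqP ->; rewrite eqxx.
  have z0 z' : z' != s -> p w s a z' = 0.
    move=> zs; have [/hacyc|//] := p_pos_or0 w s a z'.
    by rewrite sT => zs'; move: zs; rewrite zs' eqxx.
  case: (eqVneq z s) => [->|zs]; last by rewrite z0.
  have := (htr w).2 s a; rewrite (bigD1 s)//= big1 ?addr0// => z' /z0 //.
by move=> /andP[/negPf -> _].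
Qed.

Lemma step_eq h w y : Good y ->
  step_reward pi r (p w) h y = step_reward pi r (q' w) h y.
Proof.
elim: h y => [//|h IH] y gy /=.
apply: eq_bigr => a _; congr (_ * _); apply: eq_bigr => z _.
rewrite -row_eq//; have [pz|->] := p_pos_or0 w y a z; last by rewrite !mul0r.
by rewrite IH//; exact: good_step pz.
Qed.

Lemma value_eq w y : Good y -> value gamma pi r (p w) y = value gamma pi r (q' w) y.
Proof.
move=> gy.
have E : (fun n => \sum_(h < n) gamma ^+ h * step_reward pi r (p w) h y) =
         (fun n => \sum_(h < n) gamma ^+ h * step_reward pi r (q' w) h y).
  by apply: funext => n; apply: eq_bigr => h _; rewrite step_eq.
by rewrite /value E.
Qed.

Lemma pV_eq w a y (f g : S -> R) : (Good y -> f y = g y) ->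
  p w s a y * f y = p w s a y * g y.
Proof.
move=> H; have [pz|->] := p_pos_or0 w s a y; last by rewrite !mul0r.
by rewrite H//; exact: pos_good pz.
Qed.

Lemma GT_p x a y : x != s -> @measurable_fun _ _ (GT p s) R setT (fun w => p w x a y).
Proof.
move=> xs _ Y mY; rewrite setTI.
apply: sub_sigma_algebra.
exists (fun z => if z == x then (fun w => p w x a y) @^-1` Y else setT).
split; first by rewrite eq_sym (negPf xs).
split.
  move=> z; case: eqP => [->|_]; [exact: Fs_gen | exact: Fs_T].
apply/seteqP; split => w /=.
  by move=> h z _; case: eqP.
by move=> /(_ x I); rewrite eqxx.
Qed.

Lemma GT_q' x a z : @measurable_fun _ _ (GT p s) R setT (fun w => q' w x a z).
Proof.
rewrite /q'; case: eqP => xs; first exact: measurable_cst.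
by apply: GT_p; apply/eqP.
Qed.

Lemma GT_step h x : @measurable_fun _ _ (GT p s) R setT
   (fun w => step_reward pi r (q' w) h x).
Proof.
elim: h x => [|h IH] x /=; first exact: measurable_cst.
apply: mf_sum => a; apply: mf_M; first exact: measurable_cst.
apply: mf_sum => z; apply: mf_M => //; exact: GT_q'.
Qed.

Hypothesis hpi : is_policy pi.
Hypothesis hg : 0 <= gamma < 1.

Lemma GT_value y : @measurable_fun _ _ (GT p s) R setT
   (fun w => value gamma pi r (q' w) y).
Proof.
apply: (@measurable_fun_cvg _ (GT p s) R setT
   (fun n w => \sum_(h < n) gamma ^+ h * step_reward pi r (q' w) h y)).
  move=> n; apply: mf_sum => h; apply: mf_M; first exact: measurable_cst.
  exact: GT_step.
move=> w _; have [c _] := value_cvg r hpi hg y (q'_trans w).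
exact: c.
Qed.

End Reach.

Lemma RintE d0 (T : measurableType d0) (R : realType) (P : probability T R)
  (E : set T) (f : T -> R) :
  Rintegral P E f = Rintegral P setT (fun w => \1_E w * f w).
Proof.
rewrite Rintegral_mkcond; apply: eq_Rintegral => w _; rewrite patchE indicE.
by case: (w \in E) => /=; rewrite ?mul1r ?mul0r.
Qed.

Lemma ac1 (R : realType) (x y z t : R) : x * (y * z * t) = y * ((x * z) * t).
Proof. by ring. Qed.
Lemma ac2 (R : realType) (x y z t : R) : x * (y * z * t) = (y * t) * (x * z).
Proof. by ring. Qed.

Theorem lemma5 (R : realType) (S A : finType) (r : S -> A -> R) (gamma : R)
    (d : measure_display) (Omega : measurableType d) (P : probability Omega R)
    (p : Omega -> S -> A -> S -> R) :
  0 <= gamma < 1 ->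
  (forall w, is_trans (p w)) ->
  (forall x a y, measurable_fun setT (fun w => p w x a y)) ->
  independent_transitions P p ->
  acyclic_model p ->
  forall (s : S) (pi : S -> A -> R), is_policy pi ->
  let Vbar := fun y => Rintegral P setT (fun w => value gamma pi r (p w) y) in
  let pbar := fun a y => Rintegral P setT (fun w => p w s a y) in
  forall g : Omega -> R,
    is_cond_exp P (sigma_state p s)
      (fun w => \sum_(a : A) \sum_(y : S) pi s a * p w s a y * value gamma pi r (p w) y) g ->
    Rintegral P setT (fun w => g w ^+ 2)
    = \sum_(a : A) \sum_(y : S) pi s a * pbar a y * (Vbar y) ^+ 2
      - Rintegral P setT (fun w => var_next pi (p w) s Vbar).
Proof.
move=> hg htr hmeas hind [rank [T0 hacyc]] s pi hpi Vbar pbar g [gmeas [gint gE]].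
pose q := q' p s.
pose V' y w := value gamma pi r (q w) y.
pose Vb y := Rintegral P setT (V' y).
pose h w := \sum_(a : A) \sum_(y : S) pi s a * p w s a y * Vb y.
pose X' w := \sum_(a : A) \sum_(y : S) pi s a * p w s a y * V' y w.
pose Gd := Good s rank T0.
have mOm_G (f : Omega -> R) : @measurable_fun _ _ (GT p s) R setT f -> measurable_fun setT f.
  move=> mf _ Y mY; rewrite setTI; apply: (Gs_meas hmeas).
  have := mf measurableT Y mY; rewrite setTI; exact.
have mOm_F (f : Omega -> R) : @measurable_fun _ _ (FT p s) R setT f -> measurable_fun setT f.
  move=> mf _ Y mY; rewrite setTI; apply: (Fs_meas hmeas).
  have := mf measurableT Y mY; rewrite setTI; exact.
have FT_p a y : @measurable_fun _ _ (FT p s) R setT (fun w => p w s a y).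
  by move=> _ Y mY; rewrite setTI; exact: Fs_gen.
have bV y : bm (V' y).
  split; first exact: mOm_G (GT_value r htr hpi hg y).
  exists (Mr r / (1 - gamma)) => w; exact: (value_cvg r hpi hg y (q'_trans s htr w)).2.
have p_le1 x a y w : p w x a y <= 1.
  have := (htr w).2 x a; rewrite (bigD1 y)//= => <-.
  by rewrite lerDl sumr_ge0// => z _; exact: (htr w).1.
have bp x a y : bm (fun w => p w x a y).
  split; first exact: hmeas.
  by exists 1 => w; rewrite ger0_norm ?p_le1//; exact: (htr w).1.
have bh : bm h.
  apply: bm_sum => a; apply: bm_sum => y; apply: bmM; last exact: bm_cst.
  by apply: bmM; [exact: bm_cst | exact: bp].
have bX : bm X'.
  apply: bm_sum => a; apply: bm_sum => y; apply: bmM => //.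
  by apply: bmM; [exact: bm_cst | exact: bp].
have XX w : \sum_(a : A) \sum_(y : S) pi s a * p w s a y * value gamma pi r (p w) y = X' w.
  apply: eq_bigr => a _; apply: eq_bigr => y _; rewrite -!mulrA; congr (_ * _).
  apply: (pV_eq htr hacyc w a (f := fun y => value gamma pi r (p w) y) (g := fun y => V' y w)).
  by move=> gy; exact: (value_eq r gamma pi htr hacyc w gy).
have key1 E : sigma_state p s E -> Rintegral P E X' = Rintegral P E h.
  move=> FE; have mE := Fs_meas hmeas FE.
  have bI : bm (\1_E : Omega -> R) by exact: bm_indic.
  rewrite (RintE P E X') (RintE P E h).
  have e1 : (fun w => \1_E w * X' w) = (fun w => \sum_(a : A) \sum_(y : S)
      pi s a * ((\1_E w * p w s a y) * V' y w)).
    apply: funext => w; rewrite /X' mulr_sumr; apply: eq_bigr => a _.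
    by rewrite mulr_sumr; apply: eq_bigr => y _; rewrite ac1.
  have e2 : (fun w => \1_E w * h w) = (fun w => \sum_(a : A) \sum_(y : S)
      (pi s a * Vb y) * (\1_E w * p w s a y)).
    apply: funext => w; rewrite /h mulr_sumr; apply: eq_bigr => a _.
    by rewrite mulr_sumr; apply: eq_bigr => y _; rewrite ac2.
  rewrite e1 e2 !Rint_sum//; try by move=> a; apply: bm_sum => y; do ![apply: bmM | exact: bm_cst | exact: bp | exact: bV | exact: bI].
  apply: eq_bigr => a _; rewrite !Rint_sum//; try by move=> y; do ![apply: bmM | exact: bm_cst | exact: bp | exact: bV | exact: bI].
  apply: eq_bigr => y _.
  have bU : bm (fun w => \1_E w * p w s a y) by apply: bmM => //; exact: bp.
  rewrite RintZl// ?RintZl//; last by apply: bmM.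
  have mU : @measurable_fun _ _ (FT p s) R setT (fun w => \1_E w * p w s a y).
    apply: mf_M; last exact: FT_p.
    exact: (@measurable_indic _ (FT p s) R setT E FE).
  rewrite (indep_fun (F := sigma_state p s) (G := @measurable _ (GT p s))) //.
  - by rewrite /Vb; ring.
  - by move=> B C FB GC _ _; exact: (indep_G hmeas hind FB GC).
  - by move=> a0 b0; exact: (mpre mU (measurable_itv _)).
  - by move=> a0 b0; exact: (mpre (GT_value r htr hpi hg y) (measurable_itv _)).
have intE E (f : Omega -> R) : measurable E -> bm f ->
    (\int[P]_(w in E) (f w)%:E)%E = (Rintegral P E f)%:E.
  by move=> mE bf; rewrite /Rintegral fineK//; exact: integrable_fin_num (bm_int P mE bf).
have hE E : sigma_state p s E ->
    (\int[P]_(w in E) (g w)%:E = \int[P]_(w in E) (h w)%:E)%E.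
  move=> FE; have mE := Fs_meas hmeas FE.
  rewrite gE//.
  rewrite (eq_integral (fun w => (X' w)%:E)); last by move=> w _; rewrite XX.
  by rewrite !intE// key1.
have mgF : @measurable_fun _ _ (FT p s) R setT g.
  by move=> _ Y mY; rewrite setTI; exact: gmeas.
have mhF : @measurable_fun _ _ (FT p s) R setT h.
  apply: mf_sum => a; apply: mf_sum => y; apply: mf_M; last exact: measurable_cst.
  by apply: mf_M; [exact: measurable_cst | exact: FT_p].
have mg : measurable_fun setT g := mOm_F _ mgF.
pose k w := g w - h w.
have mkF : @measurable_fun _ _ (FT p s) R setT k by exact: measurable_funB.
pose D1 := k @^-1` `]0, +oo[.
have FD1 : sigma_state p s D1 := mpre mkF (measurable_itv _).
have FD2 : sigma_state p s (~` D1) := @measurableC _ (FT p s) _ FD1.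
have mD1 := Fs_meas hmeas FD1.
have mD2 := Fs_meas hmeas FD2.
have intg D : measurable D -> P.-integrable D (EFin \o g).
  by move=> mD; exact: integrableS measurableT mD (@subsetT _ _) gint.
have intk D : measurable D -> P.-integrable D (EFin \o k).
  move=> mD; apply: (eq_integrable mD _ _ _ (integrableB mD (intg D mD) (bm_int P mD bh))).
  by move=> w _.
have z1 : Rintegral P D1 k = 0.
  rewrite /k RintegralB//; try exact: bm_int; try exact: intg.
  by rewrite /Rintegral hE// subrr.
have z2 : Rintegral P (~` D1) (fun w => - k w) = 0.
  rewrite /k; under eq_Rintegral do rewrite opprB.
  rewrite RintegralB//; try exact: bm_int; try exact: intg.
  by rewrite /Rintegral hE// subrr.
have zabs : Rintegral P setT (fun w => `|k w|) = 0.
  rewrite -(setUCr D1) Rintegral_setU//; last first.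
  - by rewrite /disj_set setICr.
  - by rewrite setUCr; apply: integrable_norm; exact: intk.
  rewrite (eq_Rintegral P (D := D1) (g := k)); last first.
    move=> w /set_mem; rewrite /D1 /= in_itv /= andbT => kw.
    by rewrite gtr0_norm.
  rewrite (eq_Rintegral P (D := ~` D1) (g := fun w => - k w)); last first.
    move=> w /set_mem; rewrite /D1 /= in_itv /= andbT => /negP; rewrite -leNgt => kw.
    by rewrite ler0_norm.
  by rewrite z1 z2 addr0.
have ae1 : ae_eq P setT (fun w => (k w)%:E) (cst 0%E).
  apply/(ae_eq_integral_abs P measurableT).
    by apply/measurable_EFinP; exact: mOm_F.
  have ik : P.-integrable setT (EFin \o (normr \o k)) by apply: integrable_norm; exact: intk.
  under eq_integral do rewrite abse_EFin.
  have ik' : P.-integrable setT (fun x => (`|k x|)%:E) := ik.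
  rewrite -[LHS]fineK; last exact: integrable_fin_num ik'.
  by rewrite -/(Rintegral P setT (fun w => `|k w|)) zabs.
have ae2 : ae_eq P setT (fun w => (g w ^+ 2)%:E) (fun w => (h w ^+ 2)%:E).
  apply: filterS ae1 => w /= H1 _; have := H1 I.
  by rewrite /k => -[] /eqP; rewrite subr_eq0 => /eqP ->.
have key2 : Rintegral P setT (fun w => g w ^+ 2) = Rintegral P setT (fun w => h w ^+ 2).
  rewrite /Rintegral (ae_eq_integral (fun w => (h w ^+ 2)%:E))//;
    apply/measurable_EFinP; apply: measurable_funX => //; by case: bh.
have VbE y : Gd y -> Vbar y = Vb y.
  move=> gy; rewrite /Vbar /Vb; apply: eq_Rintegral => w _.
  exact: (value_eq r gamma pi htr hacyc w gy).
have p0 a y w : ~~ Gd y -> p w s a y = 0.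
  move=> ngy; have [pz|//] := p_pos_or0 htr w s a y.
  by move: ngy; rewrite /Gd (pos_good hacyc pz).
have pbar0 a y : ~~ Gd y -> pbar a y = 0.
  move=> ngy; rewrite /pbar (eq_Rintegral P (D := setT) (g := fun _ => 0)).
    by rewrite Rintegral_cst// mul0r.
  by move=> w _; rewrite p0.
have T1 : \sum_(a : A) \sum_(y : S) pi s a * pbar a y * Vbar y ^+ 2 =
          \sum_(a : A) \sum_(y : S) pi s a * pbar a y * Vb y ^+ 2.
  apply: eq_bigr => a _; apply: eq_bigr => y _.
  have [gy|ngy] := boolP (Gd y); first by rewrite VbE.
  by rewrite pbar0// mulr0 !mul0r.
have T2 w : var_next pi (p w) s Vbar =
    \sum_(a : A) \sum_(y : S) pi s a * p w s a y * Vb y ^+ 2 - h w ^+ 2.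
  rewrite /var_next /h; congr (_ - _ ^+ 2).
    apply: eq_bigr => a _; apply: eq_bigr => y _; rewrite -!mulrA; congr (_ * _).
    apply: (pV_eq htr hacyc w a (f := fun y => Vbar y ^+ 2) (g := fun y => Vb y ^+ 2)).
    by move=> gy; rewrite VbE.
  apply: eq_bigr => a _; apply: eq_bigr => y _; rewrite -!mulrA; congr (_ * _).
  apply: (pV_eq htr hacyc w a (f := Vbar) (g := Vb)).
  exact: VbE.
have bS : bm (fun w => \sum_(a : A) \sum_(y : S) pi s a * p w s a y * Vb y ^+ 2).
  by apply: bm_sum => a; apply: bm_sum => y; do ![apply: bmM | exact: bm_cst | exact: bp].
have T3 : Rintegral P setT (fun w => var_next pi (p w) s Vbar) =
   \sum_(a : A) \sum_(y : S) pi s a * pbar a y * Vb y ^+ 2 - Rintegral P setT (fun w => h w ^+ 2).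
  rewrite (eq_Rintegral P (D := setT) (g := fun w =>
     \sum_(a : A) \sum_(y : S) pi s a * p w s a y * Vb y ^+ 2 - h w ^+ 2)); last first.
    by move=> w _; rewrite T2.
  rewrite RintegralB//; try exact: bm_int; last first.
    by apply: bm_int => //; exact: bmM.
  congr (_ - _); rewrite Rint_sum//; last first.
    by move=> a; apply: bm_sum => y; do ![apply: bmM | exact: bm_cst | exact: bp].
  apply: eq_bigr => a _; rewrite Rint_sum//; last first.
    by move=> y; do ![apply: bmM | exact: bm_cst | exact: bp].
  apply: eq_bigr => y _.
  rewrite (eq_Rintegral P (D := setT) (g := fun w => (pi s a * Vb y ^+ 2) * p w s a y)); last first.
    by move=> w _; rewrite mulrAC.
  by rewrite RintZl// /pbar mulrAC.
by rewrite key2 T1 T3 opprB addrC subrK.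
Qed.
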